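(* Let $\Omega$ be a finite-dimensional real Euclidean space, let $N \geq 1$, and let $f_1,\dots,f_N \colon \Omega \to \mathbb{R}$ be continuous convex functions, each of which is $\mu$-strongly convex for some $\mu > 0$. Let $\nu \in (0,\mu]$, fix an index $j \in \{1,\dots,N\}$ and a vector $\zeta_j \in \Omega$. Define $g_j(\theta) = f_j(\theta) - \frac{\nu}{2}\|\theta\|^2$ and \[ E^{j}(\theta) = f_j(\theta) - \nu \langle \zeta_j, \theta\rangle, \qquad E^{j}_{\mathrm{d}}(\xi) = g_j^*(\xi) + \frac{1}{2\nu}\|\xi - \nu \zeta_j\|^2 \qquad (\theta,\xi \in \Omega). \] If $\theta_j \in \Omega$ minimizes $E^{j}$ over $\Omega$, then $\xi_j = \nu(\zeta_j - \theta_j)$ minimizes $E^{j}_{\mathrm{d}}$ over $\Omega$, and moreover \[ E^{j}(\theta_j) + E^{j}_{\mathrm{d}}(\xi_j) = 0. \]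
   Context: For a function $h \colon \Omega \to \mathbb{R}\cup\{+\infty\}$, $h^*(p) = \sup_{x\in\Omega}\{\langle p, x\rangle - h(x)\}$ denotes its Legendre--Fenchel conjugate. A function $h$ is $\mu$-strongly convex if $h - \frac{\mu}{2}\|\cdot\|^2$ is convex. In the paper $\zeta_j$ is the local control variate $\zeta_j^{(n)}$ of client $j$ at round $n$ of the algorithm DualFL; the statement holds for that vector, whatever it is. *)

(* Defs.v *)
(* Omega = 'rV[R]_n (Euclidean R^n). *)
From HB Require Import structures.
From mathcomp Require Import all_boot all_order all_algebra.
From mathcomp Require Import all_classical all_reals all_analysis.
Set Implicit Arguments. Unset Strict Implicit. Unset Printing Implicit Defensive.
Import Order.TTheory GRing.Theory Num.Theory.
Local Open Scope ring_scope.
Local Open Scope classical_set_scope.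

Definition inner (R : realType) (n : nat) (u v : 'rV[R]_n) : R :=
  \sum_(i < n) u 0 i * v 0 i.

Definition sqnorm (R : realType) (n : nat) (u : 'rV[R]_n) : R := inner u u.

Definition convex_fun (R : realType) (n : nat) (h : 'rV[R]_n -> R) : Prop :=
  forall (x y : 'rV[R]_n) (t : R), 0 <= t -> t <= 1 ->
    h (t *: x + (1 - t) *: y) <= t * h x + (1 - t) * h y.

Definition strongly_convex (R : realType) (n : nat) (mu : R)
  (h : 'rV[R]_n -> R) : Prop :=
  convex_fun (fun x => h x - mu / 2 * sqnorm x).

Definition lf_conj (R : realType) (n : nat) (h : 'rV[R]_n -> R)
  (p : 'rV[R]_n) : \bar R :=
  ereal_sup [set ((inner p x - h x)%:E) | x in [set: 'rV[R]_n]].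

(* Main.v *)
Require Import Defs.
From HB Require Import structures.
From mathcomp Require Import all_boot all_order all_algebra.
From mathcomp Require Import all_classical all_reals all_analysis.
From mathcomp Require Import ring lra.
Import Order.TTheory GRing.Theory Num.Theory numFieldNormedType.Exports.
Local Open Scope ring_scope.

Section Aux.
Local Set Implicit Arguments.
Variables (R : realType) (n : nat).
Implicit Types (u v w : 'rV[R]_n) (a : R).

Lemma inner_addl u v w : inner (u + v) w = inner u w + inner v w.
Proof. by rewrite /inner -big_split; apply eq_bigr => i _; rewrite mxE mulrDl. Qed.

Lemma inner_scalel a u w : inner (a *: u) w = a * inner u w.
Proof. by rewrite /inner mulr_sumr; apply eq_bigr => i _; rewrite mxE mulrA. Qed.

Lemma innerC u v : inner u v = inner v u.
Proof. by rewrite /inner; apply eq_bigr => i _; rewrite mulrC. Qed.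

Lemma inner_addr u v w : inner w (u + v) = inner w u + inner w v.
Proof. by rewrite innerC inner_addl !(innerC w). Qed.

Lemma inner_scaler a u w : inner w (a *: u) = a * inner w u.
Proof. by rewrite innerC inner_scalel innerC. Qed.

Lemma inner_oppl u w : inner (- u) w = - inner u w.
Proof. by rewrite -scaleN1r inner_scalel mulN1r. Qed.

Lemma inner_oppr u w : inner w (- u) = - inner w u.
Proof. by rewrite innerC inner_oppl innerC. Qed.

Lemma sqnorm_ge0 u : 0 <= sqnorm u.
Proof. by rewrite /sqnorm /inner; apply: sumr_ge0 => i _; rewrite -expr2 sqr_ge0. Qed.

End Aux.


Lemma pos_lim (R : realType) (a c : R) : 0 <= c ->
  (forall t : R, 0 < t -> t <= 1 -> c * (1 - t) <= a) -> c <= a.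
Proof.
move=> c0 H.
have h2 : c * (1 - 1/2) <= a by apply: H; lra.
rewrite leNgt; apply/negP => ac.
have cpos : 0 < c by lra.
have := H ((c - a) / (2 * c)).
have e1 : 0 < (c - a) / (2 * c) by apply: divr_gt0; lra.
have e2 : (c - a) / (2 * c) <= 1.
  by rewrite ler_pdivrMr; lra.
move=> /(_ e1 e2).
have -> : c * (1 - (c - a) / (2 * c)) = (c + a) / 2.
  by field; lra.
lra.
Qed.

Theorem proposition3p1 (R : realType) (n N : nat) (f : 'I_N -> 'rV[R]_n -> R)
  (mu nu : R) (j : 'I_N) (zeta theta : 'rV[R]_n) :
  (1 <= N)%N ->
  0 < mu ->
  (forall i, continuous (f i)) ->
  (forall i, convex_fun (f i)) ->
  (forall i, strongly_convex mu (f i)) ->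
  0 < nu -> nu <= mu ->
  let g := fun th : 'rV[R]_n => f j th - nu / 2 * sqnorm th in
  let E := fun th : 'rV[R]_n => f j th - nu * inner zeta th in
  let Ed := fun xi : 'rV[R]_n =>
    (lf_conj g xi + (1 / (2 * nu) * sqnorm (xi - nu *: zeta))%:E)%E in
  (forall th, E theta <= E th) ->
  let xi := nu *: (zeta - theta) in
  (forall xi', (Ed xi <= Ed xi')%E) /\ ((E theta)%:E + Ed xi = 0)%E.
Proof.
move=> N1 mu0 cont cvx sc nu0 numu g E Ed hmin xi.
have key : forall x, nu/2 * sqnorm (x - theta) <= E x - E theta.
  move=> x.
  have D0 := @sqnorm_ge0 _ _ (x - theta).
  apply: (@le_trans _ _ (mu/2 * sqnorm (x-theta))).
    by apply: ler_wpM2r => //; lra.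
  apply: pos_lim; first by apply: mulr_ge0 => //; lra.
  move=> t t0 t1.
  have h1 := hmin (t *: x + (1 - t) *: theta).
  have h2 := sc j x theta t (ltW t0) t1; simpl in h2.
  rewrite -(ler_pM2l t0).
  move: h1 h2; rewrite /E /sqnorm.
  rewrite !(inner_addl, inner_addr, inner_scalel, inner_scaler, inner_oppl, inner_oppr).
  rewrite (@innerC _ _ theta x).
  set FY := f j _.
  move=> h1 h2.
  nra.
have hsup : lf_conj g xi = (inner xi theta - g theta)%:E.
  apply/eqP; rewrite eq_le; apply/andP; split.
    apply: ge_ereal_sup => _ [y _ <-]; rewrite lee_fin.
    have := key y.
    rewrite /xi /g /E /sqnorm.
    rewrite !(inner_addl, inner_addr, inner_scalel, inner_scaler, inner_oppl, inner_oppr).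
    rewrite (@innerC _ _ theta y) (@innerC _ _ y theta).
    move=> h; lra.
  by apply: ereal_sup_ubound; exists theta.
split.
  move=> xi'; rewrite /Ed hsup.
  apply: (@le_trans _ _ ((inner xi' theta - g theta)%:E +
     (1 / (2 * nu) * sqnorm (xi' - nu *: zeta))%:E)%E); last first.
    by apply: leeD2r; apply: ereal_sup_ubound; exists theta.
  rewrite -!EFinD lee_fin -subr_ge0.
  have q0 := @sqnorm_ge0 _ _ (xi' - nu *: zeta + nu *: theta).
  set k := 1 / (2 * nu).
  have -> : inner xi' theta - g theta + k * sqnorm (xi' - nu *: zeta) -
    (inner xi theta - g theta + k * sqnorm (xi - nu *: zeta)) =
    k * sqnorm (xi' - nu *: zeta + nu *: theta).
    rewrite /k /xi /g /sqnorm.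
    rewrite !(inner_addl, inner_addr, inner_scalel, inner_scaler, inner_oppl, inner_oppr).
    rewrite (@innerC _ _ theta zeta) (@innerC _ _ theta xi') (@innerC _ _ zeta xi').
    by field; lra.
  by apply: mulr_ge0 => //; rewrite /k; apply: divr_ge0; lra.
rewrite /Ed hsup -!EFinD; congr EFin.
rewrite /E /xi /g /sqnorm.
rewrite !(inner_addl, inner_addr, inner_scalel, inner_scaler, inner_oppl, inner_oppr).
rewrite (@innerC _ _ theta zeta).
by field; lra.
Qed.
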